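(* (a) For $n\ge1$, the Schröder number $r_{n-1}$ equals the number of triples consisting of an integer $s\ge0$ together with integer sequences $i_1\ge i_2\ge\dots\ge i_s>0$ and $0<j_1\le j_2\le\dots\le j_s$ and a sequence $r_1,\dots,r_s\in\{0,1\}$ such that $i_1-r_1>i_2-r_2>\dots>i_s-r_s>0$, $0<j_1-r_1<j_2-r_2<\dots<j_s-r_s$, and $i_k+j_k\le n+r_k$ for all $k=1,\dots,s$. (b) For $n\ge1$, the Catalan number $C_n=\frac{1}{n+1}\binom{2n}{n}$ equals the number of pairs of integer sequences $i_1>i_2>\dots>i_s>0$ and $0<j_1<j_2<\dots<j_s$ (with $s\ge0$ arbitrary) such that $i_k+j_k\le n$ for all $k$. Moreover, for each $s\ge0$ the number of such pairs of sequences of length $s$ equals the Narayana number $N(n,s+1)=\frac1n\binom{n}{s}\binom{n}{s+1}$.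
   Context: The (large) Schröder numbers are defined by $r_0=1$ and $r_n=r_{n-1}+\sum_{i=0}^{n-1}r_ir_{n-1-i}$ for $n\ge1$. *)

(* Defs.v *)
From mathcomp Require Import all_boot all_order all_algebra.
Set Implicit Arguments. Unset Strict Implicit. Unset Printing Implicit Defensive.
Import GRing.Theory Num.Theory.

(* Large Schröder numbers: r_0 = 1, r_n = r_{n-1} + sum_{i=0}^{n-1} r_i r_{n-1-i}.
   schr_seq n = [:: r_0; ...; r_n]. *)
Fixpoint schr_seq (n : nat) : seq nat :=
  match n with
  | 0 => [:: 1]
  | m.+1 => let s := schr_seq m in
            rcons s (last 1 s + \sum_(i < m.+1) nth 0 s i * nth 0 s (m - i))
  end.

Definition schroder (n : nat) : nat := nth 0 (schr_seq n) n.

Lemma size_schr_seq n : size (schr_seq n) = n.+1.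
Proof. by elim: n => [|n IH] //=; rewrite size_rcons IH. Qed.

Lemma nth_schr_seq n k : k <= n -> nth 0 (schr_seq n) k = schroder k.
Proof.
elim: n => [|n IH]; first by rewrite leqn0 => /eqP->.
rewrite leq_eqVlt => /orP[/eqP->//|]; rewrite ltnS => kn /=.
by rewrite nth_rcons size_schr_seq ltnS kn IH.
Qed.

Lemma schroder0 : schroder 0 = 1.
Proof. by []. Qed.

Lemma schroderS n :
  schroder n.+1 = schroder n + \sum_(i < n.+1) schroder i * schroder (n - i).
Proof.
rewrite /schroder /= nth_rcons size_schr_seq ltnn eqxx.
rewrite (last_nth 0) size_schr_seq /=.
congr (_ + _); apply: eq_bigr => i _.
by rewrite !nth_schr_seq // ?leq_subr // -ltnS.
Qed.

Definition has_card (T : eqType) (P : T -> Prop) (c : nat) : Prop :=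
  exists L : seq T, [/\ uniq L, (forall x, P x <-> x \in L) & size L = c].

(* Part (a): a triple-sequence is a list [:: (i_1,j_1,r_1); ...; (i_s,j_s,r_s)]
   (encoded as ((i,j),r)); s is its length. *)
Definition schr_step (a b : nat * nat * nat) : bool :=
  [&& a.1.1 >= b.1.1, a.1.2 <= b.1.2,
      a.1.1 - a.2 > b.1.1 - b.2 & a.1.2 - a.2 < b.1.2 - b.2].

Definition schr_entry (n : nat) (a : nat * nat * nat) : bool :=
  [&& 0 < a.1.1, 0 < a.1.2, a.2 <= 1,
      0 < a.1.1 - a.2, 0 < a.1.2 - a.2 & a.1.1 + a.1.2 <= n + a.2].

Definition schr_config (n : nat) (t : seq (nat * nat * nat)) : Prop :=
  sorted schr_step t /\ all (schr_entry n) t.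

(* Part (b): a pair of sequences is a list [:: (i_1,j_1); ...; (i_s,j_s)]. *)
Definition cat_step (a b : nat * nat) : bool := (a.1 > b.1) && (a.2 < b.2).

Definition cat_entry (n : nat) (a : nat * nat) : bool :=
  [&& 0 < a.1, 0 < a.2 & a.1 + a.2 <= n].

Definition cat_config (n : nat) (t : seq (nat * nat)) : Prop :=
  sorted cat_step t /\ all (cat_entry n) t.

(* Main.v *)
Require Import Defs.
From mathcomp Require Import all_boot all_order all_algebra.
Import GRing.Theory Num.Theory.
From mathcomp Require Import zify ring lra.
Set Implicit Arguments. Unset Strict Implicit. Unset Printing Implicit Defensive.

Section Gen.
Variable T : eqType.
Variable step : rel T.
Hypothesis step_tr : transitive step.
Hypothesis step_irr : irreflexive step.

Fixpoint gen (f : nat) (S : seq T) : seq (seq T) :=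
  if f is f'.+1 then [::] :: flatten [seq map (cons x) (gen f' (filter (step x) S)) | x <- S]
  else [:: [::]].

Lemma size_filter_step x S : x \in S -> size (filter (step x) S) < size S.
Proof.
move=> xS; rewrite size_filter -(count_predC (step x) S) -addn1 leq_add2l.
by rewrite -has_count; apply/hasP; exists x => //=; rewrite step_irr.
Qed.

Lemma gen_S f S : gen f.+1 S =
  [::] :: flatten [seq map (cons x) (gen f (filter (step x) S)) | x <- S].
Proof. by []. Qed.

Lemma gen_fuel f g S : size S <= f -> size S <= g -> gen f S = gen g S.
Proof.
elim: f g S => [|f IH] g S.
  by rewrite leqn0 => /nilP -> _; case: g.
case: S => [|y S'] Hf Hg; first by move: Hg; case: g.
move: Hg; case: g => [//|g] Hg.
rewrite !gen_S; congr (_ :: _).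
apply: (congr1 flatten); apply/eq_in_map => x xS; congr (map _ _).
have h := size_filter_step xS.
by apply: IH; rewrite -ltnS; apply: leq_trans h _.
Qed.

Lemma mem_gen f S t : size S <= f ->
  (t \in gen f S) = sorted step t && all (mem S) t.
Proof.
elim: f S t => [|f IH] S t.
  by rewrite leqn0 => /nilP ->; case: t => [|x t]; rewrite /= ?inE ?andbF.
move=> Hf; case: t => [|x t] /=; first by rewrite mem_head.
rewrite in_cons /= (path_sortedE step_tr).
apply/flatten_mapP/idP.
  case=> y yS /mapP [t' Ht' [ey et]]; subst y t'.
  move: Ht'; rewrite IH; last by rewrite -ltnS (leq_trans _ Hf) // size_filter_step.
  case/andP=> st; rewrite (eq_all (a2 := predI (step x) (mem S))); last first.
    by move=> z; rewrite /= mem_filter.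
  by rewrite all_predI st yS => /andP[-> ->].
case/andP=> /andP[ax st] /andP[xS aS]; exists x => //.
apply/mapP; exists t => //.
rewrite IH; last by rewrite -ltnS (leq_trans _ Hf) // size_filter_step.
rewrite st /=; apply/allP => z zt.
have := allP ax z zt; have := allP aS z zt.
by rewrite /= mem_filter => -> ->.
Qed.

Lemma uniq_flatten_cons (R : seq T) (g : T -> seq (seq T)) :
  uniq R -> (forall x, uniq (g x)) ->
  uniq (flatten [seq map (cons x) (g x) | x <- R]).
Proof.
elim: R => [//|x R IH] /= /andP[xR uR] ug.
rewrite cat_uniq IH // andbT map_inj_uniq ?ug //=; last by move=> a b [].
apply/hasPn => y /flatten_mapP [z zR /mapP [t _ ->]].
apply/mapP => -[t' _ [ezx _]]; by move: xR; rewrite -ezx zR.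
Qed.

Lemma uniq_gen f S : uniq S -> uniq (gen f S).
Proof.
elim: f S => [//|f IH] S uS /=.
rewrite uniq_flatten_cons // ?andbT; last by move=> x; apply: IH; apply: filter_uniq.
by apply/flatten_mapP => -[y _ /mapP [t _ //]].
Qed.

Definition genc S := gen (size S) S.

Lemma gencE S : genc S =
  [::] :: flatten [seq map (cons x) (genc (filter (step x) S)) | x <- S].
Proof.
rewrite /genc; case: S => [//|y S']; rewrite [size (y :: _)]/= gen_S; congr (_ :: _).
apply: (congr1 flatten); apply/eq_in_map => x xS; congr (map _ _).
apply: gen_fuel => //; rewrite -ltnS; exact: size_filter_step.
Qed.

Lemma size_flatten_cons (R : seq T) (g : T -> seq (seq T)) :
  size (flatten [seq map (cons x) (g x) | x <- R]) = \sum_(x <- R) size (g x).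
Proof. by elim: R => [|x R IH]; rewrite ?big_nil ?big_cons //= size_cat size_map IH. Qed.

Lemma count_flatten_cons (R : seq T) (g : T -> seq (seq T)) (p : pred (seq T)) :
  count p (flatten [seq map (cons x) (g x) | x <- R]) =
  \sum_(x <- R) count (fun t => p (x :: t)) (g x).
Proof. by elim: R => [|x R IH]; rewrite ?big_nil ?big_cons //= count_cat count_map IH. Qed.

Lemma size_genc S : size (genc S) = 1 + \sum_(x <- S) size (genc (filter (step x) S)).
Proof. by rewrite gencE /= size_flatten_cons. Qed.

Lemma count_gencS S s : count (fun t => size t == s.+1) (genc S) =
  0 + \sum_(x <- S) count (fun t => size t == s) (genc (filter (step x) S)).
Proof. by rewrite gencE /= count_flatten_cons. Qed.

Lemma count_genc0 S : count (fun t => size t == 0) (genc S) = 1.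
Proof.
rewrite gencE /= count_flatten_cons big1_seq // => x _.
by apply/eqP; rewrite -leqn0 leqNgt -has_count; apply/hasPn.
Qed.

Lemma size_le_genc S t : uniq S -> t \in genc S -> size t <= size S.
Proof.
move=> uS; rewrite mem_gen // => /andP [st aS].
apply: uniq_leq_size; first exact: (sorted_uniq step_tr step_irr st).
by move=> z zt; apply: (allP aS).
Qed.

End Gen.

Lemma size_sum_count (T : eqType) (L : seq (seq T)) K :
  (forall t, t \in L -> size t < K) ->
  size L = \sum_(s < K) count (fun t => size t == s) L.
Proof.
elim: L => [|t L IH] H.
  by rewrite big1 // => s _.
rewrite /= IH; last by move=> z zL; apply: H; rewrite inE zL orbT.
rewrite big_split /= -add1n; congr (_ + _)%N.
have: size t < K by apply: H; rewrite mem_head.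
elim: K {H IH} => [//|K IHK] ltK; rewrite big_ord_recr /=.
case: (ltngtP (size t) K) => h.
- by rewrite IHK // addn0.

- by move: ltK; rewrite ltnS leqNgt h.
- rewrite h big1 // => i _; apply/eqP; rewrite eqb0 neq_ltn ltn_ord orbT //.
Qed.

Section Reg.
Variables (T : eqType) (step : rel T) (E : seq T) (u v : T -> nat) (n : nat).
Hypothesis stepE : {in E &, forall x y, step x y = (u y < u x) && (v x < v y)}.
Hypothesis Ebound : {in E, forall x, [&& 0 < u x, 0 < v x & u x + v x <= n]}.

Definition Reg a b := filter (fun x => (u x < a) && (b < v x)) E.

Lemma Reg_step a b x : x \in Reg a b -> filter (step x) (Reg a b) = Reg (u x) (v x).
Proof.
rewrite mem_filter => /andP [/andP [h1 h2] xE].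
rewrite /Reg -filter_predI; apply: eq_in_filter => y yE /=.
rewrite stepE //; case: (ltnP (u y) (u x)) => //= h3.
case: (ltnP (v x) (v y)) => //= h4; lia.
Qed.

Lemma Reg_cap a b : a + b.+1 = n -> Reg a.+1 b.+1 = Reg a b.+1.
Proof.
move=> h; apply: eq_in_filter => x xE; have := Ebound xE.
case: (ltnP b.+1 (v x)) => h2; rewrite ?andbF //= => h3; lia.
Qed.

Lemma Reg_empty b : Reg 1 b = [::].
Proof.
rewrite /Reg (eq_in_filter (a2 := pred0)) ?filter_pred0 // => x xE.
have := Ebound xE; rewrite /=; lia.
Qed.

Lemma Reg_full : Reg n 0 = E.
Proof.
rewrite /Reg (eq_in_filter (a2 := predT)) ?filter_predT // => x xE.
have := Ebound xE; rewrite /=; lia.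
Qed.

Variables (N N' : seq T -> nat) (c : nat).
Hypothesis Nrec : forall S, N S = c + \sum_(x <- S) N' (filter (step x) S).

Lemma F_rec a b : N (Reg a b) =
  c + \sum_(x <- E) (if (u x < a) && (b < v x) then N' (Reg (u x) (v x)) else 0).
Proof.
rewrite Nrec; congr (_ + _).
rewrite (eq_big_seq (fun x => N' (Reg (u x) (v x)))); last first.
  by move=> x xR; rewrite Reg_step.
by rewrite /Reg big_filter big_mkcond.
Qed.

Lemma sum_if_const (s : seq T) (p : pred T) k :
  \sum_(x <- s) (if p x then k else 0) = count p s * k.
Proof. by elim: s => [|x s IH]; rewrite ?big_nil ?big_cons //= IH mulnDl; case: (p x); rewrite ?mul1n. Qed.

Lemma if_mul (bb : bool) g : (if bb then g else 0) = bb * g.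
Proof. by case: bb; rewrite ?mul1n ?mul0n. Qed.

Lemma F_mixed a b : N (Reg a.+1 b) + N (Reg a b.+1) =
  N (Reg a b) + N (Reg a.+1 b.+1) +
  count (fun x => (u x == a) && (v x == b.+1)) E * N' (Reg a b.+1).
Proof.
rewrite !F_rec -sum_if_const.
suff : \sum_(x <- E)
     ((if (u x < a.+1) && (b < v x) then N' (Reg (u x) (v x)) else 0) +
      (if (u x < a) && (b.+1 < v x) then N' (Reg (u x) (v x)) else 0)) =
  \sum_(x <- E)
     ((if (u x < a) && (b < v x) then N' (Reg (u x) (v x)) else 0) +
      (if (u x < a.+1) && (b.+1 < v x) then N' (Reg (u x) (v x)) else 0) +
      (if (u x == a) && (v x == b.+1) then N' (Reg a b.+1) else 0)).
  by rewrite !big_split /=; lia.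
apply: eq_bigr => x _.
case e: ((u x == a) && (v x == b.+1)).
  move/andP: e => [/eqP eu /eqP ev]; rewrite eu ev !ltnSn !ltnn /=.
  by rewrite addn0 !add0n.
have : ((u x < a.+1) && (b < v x)) + ((u x < a) && (b.+1 < v x)) =
   ((u x < a) && (b < v x)) + ((u x < a.+1) && (b.+1 < v x)) + ((u x == a) && (v x == b.+1)) by lia.
rewrite e => hb.
rewrite !if_mul.
rewrite -mulnDl.
rewrite hb; move: (N' (Reg (u x) (v x))) => g; nia.
Qed.

End Reg.

Fixpoint M (p d : nat) : nat :=
  if p is p'.+1 then
    (fix Mi d := if d is d'.+1 then Mi d' + M p' d'.+2 + M p' d'.+1
                 else M p' 1 + M p' 0) d
  else 1.

Lemma M0 d : M 0 d = 1. Proof. by []. Qed.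
Lemma MS0 p : M p.+1 0 = M p 1 + M p 0. Proof. by []. Qed.
Lemma MSS p d : M p.+1 d.+1 = M p.+1 d + M p d.+2 + M p d.+1. Proof. by []. Qed.
Global Opaque M.

Lemma Mconv p d : M p d.+1 = \sum_(k < p.+1) M k 0 * M (p - k) d.
Proof.
elim: p d => [|p IH] d; first by rewrite big_ord1 M0.
elim: d => [|d IHd].
  rewrite MSS big_ord_recr /= subnn M0 muln1 (IH 1) (IH 0) -addnA addnC; congr (_ + _).
  rewrite -big_split; apply: eq_bigr => k _ /=.
  by rewrite subSn ?MS0 ?mulnDr //; have := ltn_ord k.
rewrite MSS IHd (IH d.+2) (IH d.+1) !(big_ord_recr p.+1) /= subnn !M0.
have -> : \sum_(i < p.+1) M i 0 * M (p.+1 - i) d.+1 =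
  \sum_(i < p.+1) M i 0 * M (p.+1 - i) d + \sum_(i < p.+1) M i 0 * M (p - i) d.+2
  + \sum_(i < p.+1) M i 0 * M (p - i) d.+1.
  rewrite -!big_split; apply: eq_bigr => k _ /=.
  by rewrite subSn ?MSS ?mulnDr ?addnA //; have := ltn_ord k.
set A := (X in _ + X = _). set B := (X in _ + X + _ = _). rewrite -/A -/B.
set C := \sum_(i < p.+1) M i 0 * M (p.+1 - i) d.
lia.
Qed.

Lemma schroderM p : schroder p = M p 0.
Proof.
elim/ltn_ind: p => -[//|p] IH.
rewrite schroderS MS0 Mconv addnC IH //; congr (_ + _).
apply: eq_bigr => k _; rewrite !IH //; first by rewrite ltnS leq_subr.
Qed.


Section GPart.
Local Open Scope ring_scope.

Definition Bm q s : nat := if s is s'.+1 then 'C(q, s') else 0%N.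
Definition G s p q : rat := ('C(p, s) * 'C(q, s))%:R - ('C(p, s.+1) * Bm q s)%:R.

Lemma G0 p q : G 0 p q = 1.
Proof. by rewrite /G /= !bin0 muln0 subr0. Qed.

Lemma GS0 s q : G s.+1 0 q = 0.
Proof. by rewrite /G !bin0n /= subrr. Qed.

Lemma Grec s p q : G s.+1 p.+1 q.+1 =
  G s.+1 p q.+1 + G s.+1 p.+1 q - G s.+1 p q + G s p q.
Proof.
rewrite /G /= !binS.
case: s => [|s] /=; rewrite ?bin0 ?binS !natrM !natrD; ring.
Qed.

Lemma Gcap s p : G s p.+1 p = G s p p.
Proof.
rewrite /G; case: s => [|s] /=; rewrite ?binS ?bin0 !natrM ?natrD; ring.
Qed.

Lemma Gnara s m : G s m m * (m.+1)%:R = ('C(m.+1, s) * 'C(m.+1, s.+1))%:R.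
Proof.
case: (leqP s m) => [le|lt]; last first.
  have h1 : 'C(m, s) = 0%N by apply: bin_small.
  have h2 : 'C(m, s.+1) = 0%N by apply: bin_small; apply: ltn_trans lt _.
  have h3 : 'C(m.+1, s.+1) = 0%N by apply: bin_small.
  by rewrite /G h1 h2 h3 !mul0n !muln0 subrr mul0r.
have e1 : 'C(m.+1, s) = ('C(m, s) + Bm m s)%N.
  by case: s {le} => [|s]; rewrite /= ?bin0 ?addn0 // binS.
have e2 : 'C(m.+1, s.+1) = ('C(m, s.+1) + 'C(m, s))%N by rewrite binS.
have R1 : (s.+1 * 'C(m, s.+1) = (m - s) * 'C(m, s))%N by rewrite mul_bin_left.
have R2 : (s * 'C(m, s) = (m - s).+1 * Bm m s)%N.
  case: s le {e1 e2 R1} => [|s] le /=; first by rewrite muln0.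
  by rewrite mul_bin_left subnSK.
rewrite /G e1 e2; move: R1 R2.
move: ('C(m, s)) ('C(m, s.+1)) (Bm m s) => x y z.
have hm : m = (s + (m - s))%N by lia.
move: (m - s)%N hm => t -> {le e1 e2} R1 R2.
have hs : (s%:R + 1 : rat) != 0 by rewrite natr1 pnatr_eq0.
have ht : (t%:R + 1 : rat) != 0 by rewrite natr1 pnatr_eq0.
move/(congr1 (fun k => k%:R : rat)): R1; rewrite !natrM -addn1 natrD => R1.
move/(congr1 (fun k => k%:R : rat)): R2; rewrite !natrM -addn1 natrD => R2.
have hy : (y%:R : rat) = t%:R * x%:R / (s%:R + 1).
  by rewrite -R1; field.
have hz : (z%:R : rat) = s%:R * x%:R / (t%:R + 1).
  by rewrite R2; field.
rewrite -addn1 !natrD hy hz; field.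
by rewrite hs ht.
Qed.

End GPart.

Section PartB.
Variable n : nat.

Definition Eb := filter (cat_entry n) [seq (i, j) | i <- iota 0 n.+1, j <- iota 0 n.+1].

Lemma mem_Eb x : (x \in Eb) = cat_entry n x.
Proof.
rewrite mem_filter; case h: (cat_entry n x); rewrite ?andTb ?andFb //.
case: x h => i j h; rewrite /cat_entry in h; simpl in h.
apply/allpairsP; exists (i, j); rewrite !mem_iota; split => //=; lia.
Qed.

Lemma uniq_Eb : uniq Eb.
Proof.
apply: filter_uniq; apply: allpairs_uniq; rewrite ?iota_uniq //.
by move=> [a b] [c d] _ _ /= [-> ->].
Qed.

Lemma cat_tr : transitive cat_step.
Proof. move=> y x z; rewrite /cat_step; lia. Qed.

Lemma cat_irr : irreflexive cat_step.
Proof. by move=> x; rewrite /cat_step ltnn. Qed.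

Lemma stepEb : {in Eb &, forall x y, cat_step x y = (y.1 < x.1) && (x.2 < y.2)}.
Proof. by []. Qed.

Lemma Eb_bound : {in Eb, forall x, [&& 0 < x.1, 0 < x.2 & x.1 + x.2 <= n]}.
Proof. by move=> x; rewrite mem_Eb. Qed.

Lemma count_Eb a c : count (fun x => (x.1 == a) && (x.2 == c)) Eb = cat_entry n (a, c).
Proof.
rewrite (eq_count (a2 := pred1 (a, c))); last by move=> [i j]; rewrite /= xpair_eqE.
by rewrite count_uniq_mem ?uniq_Eb // mem_Eb.
Qed.

Definition Fb s a b := count (fun t => size t == s) (genc cat_step (Reg Eb fst snd a b)).

Lemma Fb_mixed s a b : Fb s.+1 a.+1 b + Fb s.+1 a b.+1 =
  Fb s.+1 a b + Fb s.+1 a.+1 b.+1 + cat_entry n (a, b.+1) * Fb s a b.+1.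
Proof.
rewrite -count_Eb.
exact: (F_mixed (N := fun S => count (fun t => size t == s.+1) (genc cat_step S))
                (N' := fun S => count (fun t => size t == s) (genc cat_step S)) (c := 0)
                stepEb (fun S => count_gencS cat_irr S s) a b).
Qed.

Lemma Fb0 a b : Fb 0 a b = 1.
Proof. by rewrite /Fb (count_genc0 cat_irr). Qed.

Lemma Fb_empty s b : Fb s.+1 1 b = 0.
Proof. by rewrite /Fb (Reg_empty Eb_bound). Qed.

Lemma Fb_cap s a b : a + b.+1 = n -> Fb s a.+1 b.+1 = Fb s a b.+1.
Proof. by move=> h; rewrite /Fb (Reg_cap Eb_bound h). Qed.

Local Open Scope ring_scope.

Lemma Fb_G s p b d : (p.+1 + b + d)%N = n -> (Fb s p.+1 b)%:R = G s p (p + d) :> rat.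
Proof.
elim: s p b d => [|s IHs] p b d h; first by rewrite Fb0 G0.
elim: p b d h => [|p IHp] b d h; first by rewrite Fb_empty GS0.
elim: d b h => [|d IHd] b h.
  have hm := Fb_mixed s p.+1 b.
  rewrite (@Fb_cap s.+1 p.+1 b) in hm; last by lia.
  have ce : cat_entry n (p.+1, b.+1) by rewrite /cat_entry /=; lia.
  rewrite ce mul1n in hm.
  have hF : Fb s.+1 p.+2 b = (Fb s.+1 p.+1 b + Fb s p.+1 b.+1)%N by lia.
  rewrite hF natrD (IHp b 1%N) ?(IHs p b.+1 0%N) //; try lia.
  rewrite !addn0 addn1 Grec Gcap; lra.
have hm := Fb_mixed s p.+1 b.
have ce : cat_entry n (p.+1, b.+1) by rewrite /cat_entry /=; lia.
rewrite ce mul1n in hm.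
move/(congr1 (fun k => k%:R : rat)): hm; rewrite !natrD.
rewrite (IHd b.+1) ?(IHp b.+1 d.+1) ?(IHp b d.+2) ?(IHs p b.+1 d.+1); try lia.
have e1 : (p.+1 + d.+1 = (p + d.+1).+1)%N by lia.
have e2 : (p + d.+2 = (p + d.+1).+1)%N by lia.
have e3 : (p.+1 + d = p + d.+1)%N by lia.
rewrite e1 e2 e3 Grec; lra.
Qed.

Lemma Fb_full s : Fb s n 0 = count (fun t => size t == s) (genc cat_step Eb).
Proof. by rewrite /Fb (Reg_full Eb_bound). Qed.

Lemma mem_genc_Eb t : (t \in genc cat_step Eb) <-> cat_config n t.
Proof.
rewrite /genc (mem_gen cat_tr cat_irr) //.
rewrite /cat_config (eq_all (a2 := cat_entry n)); last by move=> x; rewrite /= mem_Eb.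
by split => [/andP[]|[->->]].
Qed.

Lemma part_b_s s : (0 < n)%N -> exists c : nat,
  has_card (fun t => cat_config n t /\ size t = s) c
  /\ (c%:R : rat) = ('C(n, s) * 'C(n, s.+1))%:R / n%:R.
Proof.
move=> n0; exists (Fb s n 0); split.
  exists (filter (fun t => size t == s) (genc cat_step Eb)); split.
  - exact/filter_uniq/uniq_gen/uniq_Eb.
  - move=> t; rewrite mem_filter -mem_genc_Eb.
    by split => [[-> /eqP ->]|/andP[/eqP -> ->]]; rewrite ?eqxx.
  - by rewrite size_filter Fb_full.
have [m hm] : exists m, n = m.+1 by exists n.-1; lia.
have hF : (Fb s m.+1 0)%:R = G s m (m + 0) :> rat by apply: Fb_G; rewrite !addn0 hm.
rewrite hm hF addn0 -Gnara; field.
by rewrite addrC natr1 pnatr_eq0.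
Qed.

Lemma sum_nara m X : (\sum_(s < m.+1 + X) 'C(m.+1, s) * 'C(m.+1, s.+1) = 'C(m.+1 + m.+1, m))%N.
Proof.
rewrite big_split_ord /= [X in (_ + X)%N]big1 ?addn0; last first.
  by move=> i _; rewrite (@bin_small m.+1 (m.+1 + i).+1) ?muln0 //; lia.
rewrite -binomial.Vandermonde; apply: eq_bigr => j _.
by rewrite -subSS bin_sub.
Qed.

Lemma part_b_tot : (0 < n)%N -> exists c : nat, has_card (cat_config n) c
        /\ (c%:R : rat) = ('C(2 * n, n))%:R / (n.+1)%:R.
Proof.
move=> n0; exists (size (genc cat_step Eb)); split.
  exists (genc cat_step Eb); split => //.
  - exact/uniq_gen/uniq_Eb.
  - by move=> t; rewrite mem_genc_Eb.
rewrite (@size_sum_count _ _ (n + size Eb)); last first.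
  move=> t /(size_le_genc cat_tr cat_irr uniq_Eb) h; apply: (leq_ltn_trans h).
  by rewrite -[X in (X < _)%N]add0n ltn_add2r.
rewrite natr_sum.
rewrite (eq_bigr (fun s : 'I_(n + size Eb) => ('C(n, s) * 'C(n, s.+1))%:R / n%:R)); last first.
  move=> s _; rewrite -Fb_full; move: (nat_of_ord s) => {}s.
  have [m hm] : exists m, n = m.+1 by exists n.-1; lia.
  have hF : (Fb s m.+1 0)%:R = G s m (m + 0) :> rat by apply: Fb_G; rewrite !addn0 hm.
  rewrite hm hF addn0 -Gnara; field.
  by rewrite addrC natr1 pnatr_eq0.
rewrite -mulr_suml -natr_sum.
have [m hm] : exists m, n = m.+1 by exists n.-1; lia.
rewrite hm.
rewrite sum_nara.
have h := mul_bin_left (m.+1 + m.+1) m.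
have e : (m.+1 + m.+1 - m = m.+2)%N by lia.
rewrite e in h.
have e2 : (2 * m.+1 = m.+1 + m.+1)%N by lia.
rewrite e2.
move/(congr1 (fun k => k%:R : rat)): h; rewrite !natrM => h.
apply: (@mulIf _ (m.+2%:R)); first by rewrite pnatr_eq0.
rewrite mulfVK ?pnatr_eq0 //.
apply: (@mulfI _ (m.+1%:R)); first by rewrite pnatr_eq0.
rewrite h; field.
by rewrite addrC natr1 pnatr_eq0.
Qed.

End PartB.

Section PartA.
Variable n : nat.

Definition Ea := filter (schr_entry n)
  [seq (x, r) | x <- [seq (i, j) | i <- iota 0 n.+1, j <- iota 0 n.+1], r <- iota 0 2].

Definition ua (x : nat * nat * nat) := x.1.1 - x.2.
Definition va (x : nat * nat * nat) := x.1.2 - x.2.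

Lemma mem_Ea x : (x \in Ea) = schr_entry n x.
Proof.
rewrite mem_filter; case h: (schr_entry n x); rewrite ?andTb ?andFb //.
case: x h => [[i j] r] h; rewrite /schr_entry in h; simpl in h.
apply/allpairsP; exists ((i, j), r); split => //; last by rewrite mem_iota /=; lia.
apply/allpairsP; exists (i, j); rewrite !mem_iota; split => //=; lia.
Qed.

Lemma uniq_Ea : uniq Ea.
Proof.
apply: filter_uniq; apply: allpairs_uniq; rewrite ?iota_uniq //.
- apply: allpairs_uniq; rewrite ?iota_uniq //.
  by move=> [a b] [c d] _ _ /= [-> ->].
- by move=> [a b] [c d] _ _ /= [-> ->].
Qed.

Lemma schr_tr : transitive schr_step.
Proof. move=> [[i1 j1] r1] [[i2 j2] r2] [[i3 j3] r3]; rewrite /schr_step /=; lia. Qed.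

Lemma schr_irr : irreflexive schr_step.
Proof. by move=> x; rewrite /schr_step ltnn !andbF. Qed.

Lemma stepEa : {in Ea &, forall x y, schr_step x y = (ua y < ua x) && (va x < va y)}.
Proof.
move=> [[i1 j1] r1] [[i2 j2] r2]; rewrite !mem_Ea /schr_entry /schr_step /ua /va /=.
lia.
Qed.

Lemma Ea_bound : {in Ea, forall x, [&& 0 < ua x, 0 < va x & ua x + va x <= n]}.
Proof. move=> [[i j] r]; rewrite mem_Ea /schr_entry /ua /va /=; lia. Qed.

Lemma count_Ea a c : count (fun x => (ua x == a) && (va x == c)) Ea =
  (schr_entry n (a, c, 0) + schr_entry n (a.+1, c.+1, 1))%N.
Proof.
rewrite (eq_in_count (a2 := predU (pred1 (a, c, 0)) (pred1 (a.+1, c.+1, 1)))); last first.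
  move=> [[i j] r]; rewrite mem_Ea /schr_entry /ua /va /= !xpair_eqE.
  case: r => [|[|r]] /=; lia.
have := count_predUI (pred1 (a, c, 0)) (pred1 (a.+1, c.+1, 1)) Ea.
rewrite (eq_count (a1 := predI _ _) (a2 := pred0)); last first.
  by move=> x /=; case: eqP => // ->; rewrite !xpair_eqE /= andbF.
rewrite count_pred0 addn0 => ->.
by rewrite !count_uniq_mem ?uniq_Ea // !mem_Ea.
Qed.

Definition Fa a b := size (genc schr_step (Reg Ea ua va a b)).

Lemma Fa_mixed a b : Fa a.+1 b + Fa a b.+1 =
  Fa a b + Fa a.+1 b.+1 +
  (schr_entry n (a, b.+1, 0) + schr_entry n (a.+1, b.+2, 1)) * Fa a b.+1.
Proof.
rewrite -count_Ea.
exact: (F_mixed (N := fun S => size (genc schr_step S))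
                (N' := fun S => size (genc schr_step S)) (c := 1)
                stepEa (fun S => size_genc schr_irr S) a b).
Qed.

Lemma Fa_empty b : Fa 1 b = 1.
Proof. by rewrite /Fa (Reg_empty Ea_bound). Qed.

Lemma Fa_cap a b : a + b.+1 = n -> Fa a.+1 b.+1 = Fa a b.+1.
Proof. by move=> h; rewrite /Fa (Reg_cap Ea_bound h). Qed.

Lemma Fa_M p b d : p.+1 + b + d = n -> Fa p.+1 b = M p d.
Proof.
elim: p b d => [|p IHp] b d h; first by rewrite Fa_empty M0.
elim: d b h => [|d IHd] b h.
  have hm := Fa_mixed p.+1 b.
  rewrite (@Fa_cap p.+1 b) in hm; last by lia.
  have e : (schr_entry n (p.+1, b.+1, 0) + schr_entry n (p.+2, b.+2, 1) = 1)%N.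
    rewrite /schr_entry /=; lia.
  rewrite e in hm.
  rewrite MS0 -(IHp b 1) -?(IHp b.+1 0); lia.
have hm := Fa_mixed p.+1 b.
have e : (schr_entry n (p.+1, b.+1, 0) + schr_entry n (p.+2, b.+2, 1) = 2)%N.
  rewrite /schr_entry /=; lia.
rewrite e in hm.
rewrite MSS -(IHd b.+1) -?(IHp b.+1 d.+1) -?(IHp b d.+2); lia.
Qed.

Lemma part_a : 0 < n -> has_card (schr_config n) (schroder n.-1).
Proof.
move=> n0; exists (genc schr_step Ea); split.
- exact/uniq_gen/uniq_Ea.
- move=> t; rewrite /genc (mem_gen schr_tr schr_irr) //.
  rewrite /schr_config (eq_all (a2 := schr_entry n)); last by move=> x; rewrite /= mem_Ea.
  by split => [[->->]|/andP[]].
- have [m hm] : exists m, n = m.+1 by exists n.-1; lia.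
  rewrite -(Reg_full Ea_bound) -/(Fa n 0) hm schroderM /=.
  by apply: Fa_M; rewrite hm !addn0.
Qed.

End PartA.

Local Open Scope ring_scope.

Theorem corollary2p5 (n : nat) (hn : (1 <= n)%N) :
  has_card (schr_config n) (schroder n.-1)
  /\ (exists c : nat, has_card (cat_config n) c
        /\ (c%:R : rat) = ('C(2 * n, n))%:R / (n.+1)%:R)
  /\ (forall s : nat, exists c : nat,
        has_card (fun t => cat_config n t /\ size t = s) c
        /\ (c%:R : rat) = ('C(n, s) * 'C(n, s.+1))%:R / n%:R).
Proof.
split; first exact: part_a.
split; first exact: part_b_tot.
by move=> s; apply: part_b_s.
Qed.
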